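(* There is an absolute constant $C>0$ (independent of $n$, $f$, $g$, $x$) such that for all real-valued $f,g\in C^{3}[0,1]$, all $x\in[0,1]$ and $n\in\mathbb{N}$, $$n\left|B_{n}(fg)(x)-B_{n}(f)(x)B_{n}(g)(x)-\frac{x(1-x)}{n}f'(x)g'(x)\right|\le C\,x(1-x)\frac{1}{\sqrt{n}}\Big[\|(fg)'''\|+\|f''\|\,\|g''\|+\|g\|\,\|f'''\|+\|f\|\,\|g'''\|\Big].$$ In particular the left-hand side is $O\big(x(1-x)/\sqrt{n}\big)$.
   Context: For $f:[0,1]\to\mathbb{R}$ the Bernstein polynomials are $B_{n}(f)(x)=\sum_{k=0}^{n}\binom{n}{k}x^{k}(1-x)^{n-k}f(k/n)$. $\|\cdot\|$ denotes the uniform norm on $C[0,1]$. *)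

(* Defs.v *)
From Stdlib Require Import Reals.
From Coquelicot Require Import Coquelicot.
Open Scope R_scope.

Definition bernstein (n : nat) (f : R -> R) (x : R) : R :=
  sum_f_R0 (fun k => Binomial.C n k * x ^ k * (1 - x) ^ (n - k) * f (INR k / INR n)) n.

Definition C3 (f : R -> R) : Prop :=
  (forall k x, (k <= 3)%nat -> ex_derive_n f k x) /\
  (forall x, continuous (Derive_n f 3) x).

Definition unorm (h : R -> R) : R :=
  real (Lub_Rbar (fun y => exists x, 0 <= x <= 1 /\ y = Rabs (h x))).

(* Main.v *)
Require Import Defs.
From Stdlib Require Import Reals Lra Lia.
From Coquelicot Require Import Coquelicot.
Open Scope R_scope.


Fixpoint Ex (n : nat) (p : R) (phi : nat -> R) : R :=
  match n with
  | O => phi O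
  | S m => (1 - p) * Ex m p phi + p * Ex m p (fun k => phi (S k))
  end.

Lemma Ex_S n p phi : Ex (S n) p phi = (1 - p) * Ex n p phi + p * Ex n p (fun k => phi (S k)).
Proof. reflexivity. Qed.

Lemma C_nn n : Binomial.C n n = 1.
Proof. unfold Binomial.C. rewrite Nat.sub_diag. simpl. field. apply INR_fact_neq_0. Qed.

Lemma C_n0 n : Binomial.C n 0 = 1.
Proof. unfold Binomial.C. rewrite Nat.sub_0_r. simpl. field. apply INR_fact_neq_0. Qed.

Lemma Ex_sum n p phi :
  Ex n p phi = sum_f_R0 (fun k => Binomial.C n k * p ^ k * (1 - p) ^ (n - k) * phi k) n.
Proof.
  revert phi; induction n as [|n IH]; intro phi.
  - simpl. rewrite C_n0. ring.
  - rewrite Ex_S, !IH.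
    destruct n as [|m].
    + simpl. rewrite !C_n0, C_nn. simpl. ring.
    + set (A := fun k => Binomial.C (S m) k * p ^ k * (1 - p) ^ (S m - k) * phi k).
      set (B := fun k => Binomial.C (S m) k * p ^ k * (1 - p) ^ (S m - k) * phi (S k)).
      set (T := fun k => Binomial.C (S (S m)) k * p ^ k * (1 - p) ^ (S (S m) - k) * phi k).
      rewrite (decomp_sum A (S m)) by lia. rewrite (tech5 B m).
      rewrite (decomp_sum T (S (S m))) by lia. simpl pred. rewrite (tech5 (fun i => T (S i)) m).
      assert (Hs : sum_f_R0 (fun i => T (S i)) m
        = sum_f_R0 (fun i => B i * p) m + sum_f_R0 (fun i => A (S i) * (1 - p)) m).
      { rewrite <- plus_sum. apply sum_eq. intros i Hi. unfold A, B, T.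
        rewrite <- (pascal (S m) i) by lia.
        replace (S (S m) - S i)%nat with (S (S m - S i)) by lia.
        replace (S m - i)%nat with (S (S m - S i)) by lia.
        simpl. ring. }
      rewrite Hs, <- !scal_sum. unfold A, B, T.
      rewrite !C_n0, !C_nn, !Nat.sub_diag, !Nat.sub_0_r. simpl. ring.
Qed.

Lemma Ex_ext n p phi psi : (forall k, (k <= n)%nat -> phi k = psi k) -> Ex n p phi = Ex n p psi.
Proof.
  revert phi psi; induction n as [|n IH]; intros phi psi H; simpl.
  - apply H; lia.
  - rewrite (IH phi psi), (IH (fun k => phi (S k)) (fun k => psi (S k))); auto; intros; apply H; lia.
Qed.

Lemma Ex_le n p phi psi : 0 <= p <= 1 -> (forall k, (k <= n)%nat -> phi k <= psi k) -> Ex n p phi <= Ex n p psi.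
Proof.
  intro Hp; revert phi psi; induction n as [|n IH]; intros phi psi H; simpl.
  - apply H; lia.
  - assert (H1 := IH phi psi (fun k Hk => H k ltac:(lia))).
    assert (H2 := IH (fun k => phi (S k)) (fun k => psi (S k)) (fun k Hk => H (S k) ltac:(lia))).
    nra.
Qed.

Lemma Ex_plus n p phi psi : Ex n p (fun k => phi k + psi k) = Ex n p phi + Ex n p psi.
Proof.
  revert phi psi; induction n as [|n IH]; intros phi psi; simpl.
  - ring.
  - rewrite (IH phi psi), (IH (fun k => phi (S k)) (fun k => psi (S k))). ring.
Qed.

Lemma Ex_scal n p a phi : Ex n p (fun k => a * phi k) = a * Ex n p phi.
Proof.
  revert phi; induction n as [|n IH]; intros phi; simpl.
  - ring.
  - rewrite (IH phi), (IH (fun k => phi (S k))). ring.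
Qed.

Lemma Ex_const n p c : Ex n p (fun _ => c) = c.
Proof. induction n as [|n IH]; simpl; [ring| rewrite IH; ring]. Qed.

Lemma Ex_abs n p phi : 0 <= p <= 1 -> Rabs (Ex n p phi) <= Ex n p (fun k => Rabs (phi k)).
Proof.
  intro Hp. apply Rabs_le. split.
  - assert (H := Ex_le n p (fun k => - Rabs (phi k)) phi Hp (fun k _ => ltac:(pose proof (Rle_abs (- phi k)); rewrite Rabs_Ropp in *; lra))).
    rewrite (Ex_ext n p (fun k => - Rabs (phi k)) (fun k => (-1) * Rabs (phi k))) in H by (intros; ring).
    rewrite Ex_scal in H. lra.
  - apply Ex_le; auto. intros k _. apply Rle_abs.
Qed.

Section Mom.
Variable p : R.
Definition Mo n j := Ex n p (fun k => (INR k - INR n * p) ^ j).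

Lemma Ex_shift4 n c :
  Ex n p (fun k => (INR k - INR n * p + c) ^ 4) =
  c^4 + 4 * c^3 * Mo n 1 + 6 * c^2 * Mo n 2 + 4 * c * Mo n 3 + Mo n 4.
Proof.
  unfold Mo. set (Y := fun k => INR k - INR n * p).
  rewrite (Ex_ext n p _ (fun k => c^4 + (4*c^3 * Y k ^ 1 + (6*c^2 * Y k ^ 2 + (4*c * Y k^3 + Y k ^ 4)))))
    by (intros; unfold Y; ring).
  rewrite !Ex_plus, !Ex_scal, Ex_const. unfold Y. ring.
Qed.

Lemma Ex_shift3 n c :
  Ex n p (fun k => (INR k - INR n * p + c) ^ 3) =
  c^3 + 3 * c^2 * Mo n 1 + 3 * c * Mo n 2 + Mo n 3.
Proof.
  unfold Mo. set (Y := fun k => INR k - INR n * p).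
  rewrite (Ex_ext n p _ (fun k => c^3 + (3*c^2 * Y k ^ 1 + (3*c * Y k ^ 2 + Y k^3))))
    by (intros; unfold Y; ring).
  rewrite !Ex_plus, !Ex_scal, Ex_const. unfold Y. ring.
Qed.

Lemma Ex_shift2 n c :
  Ex n p (fun k => (INR k - INR n * p + c) ^ 2) = c^2 + 2 * c * Mo n 1 + Mo n 2.
Proof.
  unfold Mo. set (Y := fun k => INR k - INR n * p).
  rewrite (Ex_ext n p _ (fun k => c^2 + (2*c * Y k ^ 1 + Y k ^ 2)))
    by (intros; unfold Y; ring).
  rewrite !Ex_plus, !Ex_scal, Ex_const. unfold Y. ring.
Qed.

Lemma Ex_shift1 n c :
  Ex n p (fun k => (INR k - INR n * p + c) ^ 1) = c + Mo n 1.
Proof.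
  unfold Mo. rewrite (Ex_ext n p _ (fun k => c + (INR k - INR n * p)^1)) by (intros; ring).
  rewrite Ex_plus, Ex_const. ring.
Qed.

Lemma Mo_S n j : Mo (S n) j =
  (1 - p) * Ex n p (fun k => (INR k - INR n * p + - p) ^ j)
  + p * Ex n p (fun k => (INR k - INR n * p + (1 - p)) ^ j).
Proof.
  unfold Mo. rewrite Ex_S. f_equal; [f_equal|f_equal]; apply Ex_ext; intros; rewrite ?S_INR; f_equal; ring.
Qed.

Lemma moments n :
  Mo n 1 = 0 /\ Mo n 2 = INR n * p * (1 - p) /\
  Mo n 3 = INR n * p * (1 - p) * (1 - 2 * p) /\
  Mo n 4 = INR n * p * (1 - p) * (1 + 3 * (INR n - 2) * p * (1 - p)).
Proof.
  induction n as [|n [H1 [H2 [H3 H4]]]].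
  - unfold Mo; simpl; repeat split; ring.
  - rewrite !Mo_S, !Ex_shift1, !Ex_shift2, !Ex_shift3, !Ex_shift4, H1, H2, H3, H4, S_INR.
    repeat split; ring.
Qed.
End Mom.

Lemma isd_plus (f g : R -> R) t a b : is_derive f t a -> is_derive g t b -> is_derive (fun s => f s + g s) t (a + b).
Proof. intros; apply (is_derive_plus f g); auto. Qed.
Lemma isd_minus (f g : R -> R) t a b : is_derive f t a -> is_derive g t b -> is_derive (fun s => f s - g s) t (a - b).
Proof. intros; apply (is_derive_minus f g); auto. Qed.
Lemma isd_mult (f g : R -> R) t a b : is_derive f t a -> is_derive g t b -> is_derive (fun s => f s * g s) t (a * g t + f t * b).
Proof. intros; apply (is_derive_mult f g); auto. intros; apply Rmult_comm. Qed.
Lemma isd_const (c t : R) : is_derive (fun _ => c) t 0.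
Proof. apply (is_derive_const c t). Qed.
Lemma isd_val (f : R -> R) (t a b : R) : is_derive f t a -> a = b -> is_derive f t b.
Proof. intros H ->; exact H. Qed.
Lemma isd_opp_comp (f : R -> R) t a : is_derive f (- t) a -> is_derive (fun s => f (- s)) t (- a).
Proof.
  intro H. assert (H2 : is_derive (fun s : R => - s) t (-1)).
  { auto_derive; auto; ring. }
  pose proof (is_derive_comp f (fun s => - s) t a (-1) H H2) as H3.
  apply (isd_val _ _ _ _ H3). simpl. unfold scal; simpl; unfold mult; simpl. ring.
Qed.

Lemma fam_Derive_n (D : nat -> R -> R) N :
  (forall k t, (k <= N)%nat -> is_derive (D k) t (D (S k) t)) ->
  forall k, (k <= S N)%nat -> (forall t, Derive_n (D 0%nat) k t = D k t) /\ (forall t, ex_derive_n (D 0%nat) k t).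
Proof.
  intros HD k; induction k as [|k IH]; intro Hk.
  - split; intros; simpl; auto.
  - destruct (IH ltac:(lia)) as [E _]. split; intro t.
    + simpl. rewrite (Derive_ext _ _ _ E). apply is_derive_unique, HD. lia.
    + simpl. apply (ex_derive_ext (D k)). intros; symmetry; apply E.
      exists (D (S k) t). apply HD; lia.
Qed.

Lemma sum_zero_pow (D : nat -> R -> R) x N :
  sum_f_R0 (fun m => (x - x) ^ m / INR (Factorial.fact m) * D m x) N = D 0%nat x.
Proof.
  induction N as [|N IH]; simpl sum_f_R0.
  - simpl. field.
  - rewrite IH. replace ((x - x) ^ S N) with 0 by (simpl; ring). unfold Rdiv; ring.
Qed.

Lemma taylor_fam (D : nat -> R -> R) N x y :
  (forall k t, (k <= N)%nat -> is_derive (D k) t (D (S k) t)) ->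
  exists z, Rmin x y <= z <= Rmax x y /\
    D 0%nat y = sum_f_R0 (fun m => (y - x) ^ m / INR (Factorial.fact m) * D m x) N
                + (y - x) ^ (S N) / INR (Factorial.fact (S N)) * D (S N) z.
Proof.
  intro HD.
  assert (Hlt : forall (D : nat -> R -> R) x y, x < y ->
    (forall k t, (k <= N)%nat -> is_derive (D k) t (D (S k) t)) ->
    exists z, x < z < y /\
    D 0%nat y = sum_f_R0 (fun m => (y - x) ^ m / INR (Factorial.fact m) * D m x) N
                + (y - x) ^ (S N) / INR (Factorial.fact (S N)) * D (S N) z).
  { clear. intros D x y Hxy HD.
    destruct (Taylor_Lagrange (D 0%nat) N x y Hxy) as [z [Hz E]].
    { intros t _ k Hk. apply (fam_Derive_n D N HD k Hk). }
    exists z. split; auto. rewrite E. f_equal.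
    - apply sum_eq; intros. f_equal. apply (fam_Derive_n D N HD); lia.
    - f_equal. apply (fam_Derive_n D N HD); lia. }
  destruct (Rtotal_order x y) as [H|[H|H]].
  - destruct (Hlt D x y H HD) as [z [Hz E]]. exists z. split; auto.
    rewrite Rmin_left, Rmax_right; lra.
  - subst. exists y. split. { rewrite Rmin_left, Rmax_left; lra. }
    rewrite sum_zero_pow. replace ((y - y) ^ S N) with 0 by (simpl; ring). unfold Rdiv; ring.
  - set (D' := fun k t => (-1) ^ k * D k (- t)).
    assert (HD' : forall k t, (k <= N)%nat -> is_derive (D' k) t (D' (S k) t)).
    { intros k t Hk. unfold D'. apply (isd_val _ _ ((-1)^k * (- D (S k) (- t)))).
      - apply (is_derive_scal (fun s => D k (- s))). apply isd_opp_comp. apply HD; auto.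
      - simpl. ring. }
    destruct (Hlt D' (- x) (- y) ltac:(lra) HD') as [z [Hz E]].
    exists (- z). split. { rewrite Rmin_right, Rmax_left; lra. }
    unfold D' in E. rewrite Ropp_involutive in E. simpl pow in E at 1.
    replace (D 0%nat y) with (1 * D 0%nat y) by ring. rewrite E. f_equal.
    + apply sum_eq; intros m _. rewrite Ropp_involutive.
      replace ((y - x) ^ m) with ((- y - - x) ^ m * (-1) ^ m).
      * field. apply INR_fact_neq_0.
      * rewrite <- Rpow_mult_distr. f_equal. ring.
    + replace ((y - x) ^ S N) with ((- y - - x) ^ S N * (-1) ^ S N).
      * field. apply INR_fact_neq_0.
      * rewrite <- Rpow_mult_distr. f_equal. ring.
Qed.

Lemma C3_isd f : C3 f -> forall k t, (k <= 2)%nat -> is_derive (Derive_n f k) t (Derive_n f (S k) t).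
Proof.
  intros [H _] k t Hk. apply Derive_correct. exact (H (S k) t ltac:(lia)).
Qed.

Lemma C3_cont f : C3 f -> forall k t, (k <= 3)%nat -> continuous (Derive_n f k) t.
Proof.
  intros Hf k t Hk. destruct (Nat.le_gt_cases k 2) as [H|H].
  - apply (@ex_derive_continuous R_AbsRing R_NormedModule). exists (Derive_n f (S k) t). apply C3_isd; auto.
  - replace k with 3%nat by lia. apply (proj2 Hf).
Qed.

Lemma unorm_bound h : (forall t, 0 <= t <= 1 -> continuous h t) ->
  forall t, 0 <= t <= 1 -> Rabs (h t) <= unorm h.
Proof.
  intros Hc t Ht.
  destruct (continuity_ab_maj (fun t => Rabs (h t)) 0 1 ltac:(lra)) as [M [HM HM01]].
  { intros c Hc'. apply continuity_pt_filterlim. apply continuous_Rabs_comp. apply Hc; auto. }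
  unfold unorm.
  destruct (Lub_Rbar_correct (fun y => exists x, 0 <= x <= 1 /\ y = Rabs (h x))) as [Hub Hl].
  assert (H1 := Hub (Rabs (h t)) (ex_intro _ t (conj Ht eq_refl))).
  assert (H2 : Rbar_le (Lub_Rbar (fun y => exists x, 0 <= x <= 1 /\ y = Rabs (h x))) (Rabs (h M))).
  { apply Hl. intros y [x [Hx ->]]. simpl. apply HM; auto. }
  destruct (Lub_Rbar _); simpl in *; tauto.
Qed.

Section FG.
Variables f g : R -> R.
Hypothesis Hf : C3 f.
Hypothesis Hg : C3 g.
Notation F := (Derive_n f).
Notation G := (Derive_n g).

Definition Pf (k : nat) (t : R) : R :=
  match k with
  | O => f t * g t
  | 1 => F 1 t * g t + f t * G 1 t
  | 2 => F 2 t * g t + 2 * (F 1 t * G 1 t) + f t * G 2 t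
  | _ => F 3 t * g t + 3 * (F 2 t * G 1 t) + 3 * (F 1 t * G 2 t) + f t * G 3 t
  end.

Lemma isdf t : is_derive f t (F 1 t).
Proof. exact (C3_isd f Hf 0 t ltac:(lia)). Qed.
Lemma isdg t : is_derive g t (G 1 t).
Proof. exact (C3_isd g Hg 0 t ltac:(lia)). Qed.

Lemma Pf_der k t : (k <= 2)%nat -> is_derive (Pf k) t (Pf (S k) t).
Proof.
  intro Hk. pose proof (C3_isd f Hf 1 t ltac:(lia)). pose proof (C3_isd f Hf 2 t ltac:(lia)).
  pose proof (C3_isd g Hg 1 t ltac:(lia)). pose proof (C3_isd g Hg 2 t ltac:(lia)).
  pose proof (isdf t). pose proof (isdg t).
  destruct k as [|[|[|k]]]; try lia; cbn [Pf].
  - eapply isd_val. apply isd_mult; eauto. ring.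
  - eapply isd_val. apply isd_plus; apply isd_mult; eauto. ring.
  - eapply isd_val. apply isd_plus; [apply isd_plus|]. 
    + apply isd_mult; eauto.
    + apply (is_derive_scal (fun s => F 1 s * G 1 s)). apply isd_mult; eauto.
    + apply isd_mult; eauto.
    + ring.
Qed.

Lemma Leibniz3 t : Derive_n (fun t => f t * g t) 3 t = Pf 3 t.
Proof. exact (proj1 (fam_Derive_n Pf 2 (fun k t Hk => Pf_der k t Hk) 3 ltac:(lia)) t). Qed.

Lemma Pf3_cont t : continuous (Derive_n (fun t => f t * g t) 3) t.
Proof.
  apply (continuous_ext (fun t => F 3 t * g t + 3 * (F 2 t * G 1 t) + 3 * (F 1 t * G 2 t) + f t * G 3 t)).
  { intros; symmetry; apply Leibniz3. }
  pose proof (C3_cont f Hf) as H1. pose proof (C3_cont g Hg) as H2.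
  assert (cf : continuous f t) by exact (C3_cont f Hf 0 t ltac:(lia)).
  assert (cg : continuous g t) by exact (C3_cont g Hg 0 t ltac:(lia)).
  assert (M : forall a b : R -> R, continuous a t -> continuous b t -> continuous (fun s => a s * b s) t).
  { intros a b Ha Hb. apply (continuous_mult a b); auto. }
  assert (P : forall a b : R -> R, continuous a t -> continuous b t -> continuous (fun s => a s + b s) t).
  { intros a b Ha Hb. apply (continuous_plus a b); auto. }
  assert (K : forall c : R, continuous (fun _ : R => c) t) by (intros; apply continuous_const).
  repeat first [ apply P | apply M | apply K | assumption | (apply H1; lia) | (apply H2; lia) ].
Qed.
End FG.

Lemma in01_between x y z : 0 <= x <= 1 -> 0 <= y <= 1 -> Rmin x y <= z <= Rmax x y -> 0 <= z <= 1.
Proof.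
  intros Hx Hy Hz. unfold Rmin, Rmax in Hz. destruct (Rle_dec x y); lra.
Qed.

Lemma taylor_f f (Hf : C3 f) x y : 0 <= x <= 1 -> 0 <= y <= 1 ->
  Rabs (f y - f x - Derive f x * (y - x)) <= unorm (Derive_n f 2) / 2 * (y - x) ^ 2.
Proof.
  intros Hx Hy.
  destruct (taylor_fam (Derive_n f) 1 x y (fun k t Hk => C3_isd f Hf k t ltac:(lia))) as [z [Hz E]].
  assert (Hz01 := in01_between x y z Hx Hy Hz).
  assert (B := unorm_bound (Derive_n f 2) (fun t _ => C3_cont f Hf 2 t ltac:(lia)) z Hz01).
  simpl in E. change (Derive (fun x => f x) x) with (Derive f x) in E.
  assert (Eq : f y - f x - Derive f x * (y - x) = (y - x) * (y - x) / 2 * Derive (fun x => Derive (fun x => f x) x) z).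
  { rewrite E. field. }
  rewrite Eq.
  simpl in B. rewrite Rabs_mult.
  assert (Ea : Rabs ((y - x) * (y - x) / 2) = (y - x) ^ 2 / 2).
  { rewrite Rabs_pos_eq. field. pose proof (Rle_0_sqr (y-x)). unfold Rsqr in *. lra. }
  rewrite Ea.
  assert (0 <= (y - x) ^ 2) by (pose proof (Rle_0_sqr (y-x)); unfold Rsqr in *; simpl; lra).
  replace (unorm (Derive_n f 2) / 2 * (y - x) ^ 2) with ((y - x) ^ 2 / 2 * unorm (Derive_n f 2)) by field.
  apply Rmult_le_compat_l; [lra | exact B].
Qed.

Section H.
Variables f g : R -> R.
Hypothesis Hf : C3 f.
Hypothesis Hg : C3 g.
Variable x0 : R.
Notation F := (Derive_n f).
Notation G := (Derive_n g).

Definition Hf3 (k : nat) (t : R) : R :=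
  match k with
  | O => (f t - f x0) * (g t - g x0)
  | 1 => F 1 t * (g t - g x0) + (f t - f x0) * G 1 t
  | 2 => F 2 t * (g t - g x0) + 2 * (F 1 t * G 1 t) + (f t - f x0) * G 2 t
  | _ => F 3 t * (g t - g x0) + 3 * (F 2 t * G 1 t) + 3 * (F 1 t * G 2 t) + (f t - f x0) * G 3 t
  end.

Lemma Hf3_der k t : (k <= 2)%nat -> is_derive (Hf3 k) t (Hf3 (S k) t).
Proof.
  intro Hk. pose proof (C3_isd f Hf 1 t ltac:(lia)). pose proof (C3_isd f Hf 2 t ltac:(lia)).
  pose proof (C3_isd g Hg 1 t ltac:(lia)). pose proof (C3_isd g Hg 2 t ltac:(lia)).
  pose proof (isdf f Hf t). pose proof (isdg g Hg t).
  assert (Df : is_derive (fun s => f s - f x0) t (F 1 t)).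
  { eapply isd_val. apply isd_minus; [eauto| apply isd_const]. ring. }
  assert (Dg : is_derive (fun s => g s - g x0) t (G 1 t)).
  { eapply isd_val. apply isd_minus; [eauto| apply isd_const]. ring. }
  destruct k as [|[|[|k]]]; try lia; cbn [Hf3].
  - eapply isd_val. apply (isd_mult (fun s => f s - f x0) (fun s => g s - g x0)); eauto. ring.
  - eapply isd_val. apply isd_plus.
    + apply (isd_mult (F 1) (fun s => g s - g x0)); eauto.
    + apply (isd_mult (fun s => f s - f x0) (G 1)); eauto.
    + ring.
  - eapply isd_val. apply isd_plus; [apply isd_plus|].
    + apply (isd_mult (F 2) (fun s => g s - g x0)); eauto.
    + apply (is_derive_scal (fun s => F 1 s * G 1 s)). apply isd_mult; eauto.
    + apply (isd_mult (fun s => f s - f x0) (G 2)); eauto.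
    + ring.
Qed.

Lemma taylor_h y : 0 <= x0 <= 1 -> 0 <= y <= 1 ->
  Rabs ((f y - f x0) * (g y - g x0) - Derive f x0 * Derive g x0 * (y - x0) ^ 2)
  <= (unorm (Derive_n (fun t => f t * g t) 3) + unorm g * unorm (Derive_n f 3)
      + unorm f * unorm (Derive_n g 3)) / 6 * Rabs (y - x0) ^ 3.
Proof.
  intros Hx Hy.
  destruct (taylor_fam Hf3 2 x0 y (fun k t Hk => Hf3_der k t Hk)) as [z [Hz E]].
  assert (Hz01 := in01_between x0 y z Hx Hy Hz).
  assert (B1 := unorm_bound _ (fun t _ => Pf3_cont f g Hf Hg t) z Hz01).
  assert (B2 := unorm_bound _ (fun t _ => C3_cont f Hf 3 t ltac:(lia)) z Hz01).
  assert (B3 := unorm_bound _ (fun t _ => C3_cont g Hg 3 t ltac:(lia)) z Hz01).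
  assert (B4 := unorm_bound _ (fun t _ => C3_cont f Hf 0 t ltac:(lia)) x0 Hx).
  assert (B5 := unorm_bound _ (fun t _ => C3_cont g Hg 0 t ltac:(lia)) x0 Hx).
  rewrite Leibniz3 in B1 by auto. cbn [Pf] in B1.
  cbn [sum_f_R0] in E.
  assert (e0 : Hf3 0 x0 = 0) by (cbn [Hf3]; ring).
  assert (e1 : Hf3 1 x0 = 0) by (cbn [Hf3]; ring).
  assert (e2 : Hf3 2 x0 = 2 * (Derive f x0 * Derive g x0)) by (cbn [Hf3]; change (Derive_n f 1 x0) with (Derive f x0); change (Derive_n g 1 x0) with (Derive g x0); ring).
  rewrite e0, e1, e2 in E.
  replace (INR (Factorial.fact 2)) with 2 in E by (simpl; ring).
  replace (INR (Factorial.fact 3)) with 6 in E by (simpl; ring).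
  set (h3 := Hf3 3 z) in *.
  assert (Eh : h3 = Pf f g 3 z - F 3 z * g x0 - f x0 * G 3 z) by (unfold h3; cbn [Hf3 Pf]; ring).
  cbn [Pf] in Eh.
  replace ((f y - f x0) * (g y - g x0) - Derive f x0 * Derive g x0 * (y - x0) ^ 2)
    with ((y - x0) ^ 3 / 6 * h3).
  2:{ cbn [Hf3] in E. rewrite E. field. split; apply INR_fact_neq_0. }
  rewrite Rabs_mult.
  replace (Rabs ((y - x0) ^ 3 / 6)) with (Rabs (y - x0) ^ 3 / 6)
    by (unfold Rdiv; rewrite Rabs_mult, <- RPow_abs, (Rabs_pos_eq (/ 6)) by lra; ring).
  assert (0 <= Rabs (y - x0) ^ 3) by (apply pow_le, Rabs_pos).
  assert (Habs : Rabs h3 <= unorm (Derive_n (fun t => f t * g t) 3) + unorm g * unorm (Derive_n f 3)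
      + unorm f * unorm (Derive_n g 3)).
  { rewrite Eh. change (unorm (Derive_n f 0)) with (unorm f) in B4.
    change (unorm (Derive_n g 0)) with (unorm g) in B5.
    change (Derive_n f 0 x0) with (f x0) in B4. change (Derive_n g 0 x0) with (g x0) in B5.
    assert (0 <= Rabs (f x0)) by apply Rabs_pos. assert (0 <= Rabs (g x0)) by apply Rabs_pos.
    assert (0 <= Rabs (F 3 z)) by apply Rabs_pos. assert (0 <= Rabs (G 3 z)) by apply Rabs_pos.
    assert (T1 : Rabs (F 3 z * g x0) <= unorm g * unorm (F 3)).
    { rewrite Rabs_mult, Rmult_comm. apply Rmult_le_compat; auto. }
    assert (T2 : Rabs (f x0 * G 3 z) <= unorm f * unorm (G 3)).
    { rewrite Rabs_mult. apply Rmult_le_compat; auto. }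
    set (P := F 3 z * g z + 3 * (F 2 z * G 1 z) + 3 * (F 1 z * G 2 z) + f z * G 3 z) in *.
    pose proof (Rabs_triang (P - F 3 z * g x0) (- (f x0 * G 3 z))).
    pose proof (Rabs_triang P (- (F 3 z * g x0))).
    rewrite Rabs_Ropp in *.
    replace (P - F 3 z * g x0 - f x0 * G 3 z) with (P - F 3 z * g x0 + - (f x0 * G 3 z)) by ring.
    replace (P - F 3 z * g x0) with (P + - (F 3 z * g x0)) in * by ring.
    lra. }
  replace ((unorm (Derive_n (fun t => f t * g t) 3) + unorm g * unorm (Derive_n f 3)
      + unorm f * unorm (Derive_n g 3)) / 6 * Rabs (y - x0) ^ 3)
    with (Rabs (y - x0) ^ 3 / 6 * (unorm (Derive_n (fun t => f t * g t) 3) + unorm g * unorm (Derive_n f 3)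
      + unorm f * unorm (Derive_n g 3))) by field.
  apply Rmult_le_compat_l; [lra | exact Habs].
Qed.
End H.

Lemma Ex_lin n p a b c d e phi1 phi2 phi3 phi4 :
  Ex n p (fun k => a * phi1 k + b * phi2 k + c * phi3 k + d * phi4 k + e)
  = a * Ex n p phi1 + b * Ex n p phi2 + c * Ex n p phi3 + d * Ex n p phi4 + e.
Proof.
  rewrite !Ex_plus, !Ex_scal, Ex_const. reflexivity.
Qed.

Lemma cube_bound s d : 0 < s -> Rabs d ^ 3 <= (d ^ 2 / s + s * d ^ 4) / 2.
Proof.
  intro Hs. set (a := Rabs d).
  assert (E2 : d ^ 2 = a ^ 2) by (unfold a; rewrite pow2_abs; reflexivity).
  assert (E4 : d ^ 4 = a ^ 4).
  { replace (d ^ 4) with ((d ^ 2) ^ 2) by ring. rewrite E2. ring. }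
  rewrite E2, E4.
  assert (H : (a ^ 2 / s + s * a ^ 4) / 2 - a ^ 3 = (a * (1 - s * a)) * (a * (1 - s * a)) / (2 * s))
    by (field; lra).
  assert (0 <= (a * (1 - s * a)) * (a * (1 - s * a)) / (2 * s)).
  { apply Rmult_le_pos. apply Rle_0_sqr. apply Rlt_le, Rinv_0_lt_compat. lra. }
  lra.
Qed.

Lemma arith1 (s q K : R) : 1 <= s -> 0 <= q <= 1/4 -> 0 <= K ->
  (s * s) * (K / 12 * (q / (s * s) / s + s * (/ (s * s) ^ 4 * ((s * s) * q * (1 + 3 * ((s * s) - 2) * q)))))
  <= q * (1 / s) * K.
Proof.
  intros Hs Hq HK.
  replace ((s * s) * (K / 12 * (q / (s * s) / s + s * (/ (s * s) ^ 4 * ((s * s) * q * (1 + 3 * ((s * s) - 2) * q))))))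
    with ((q * (1 / s) * K) * ((1 + (1 + 3 * (s * s - 2) * q) / (s * s)) / 12)) by (field; lra).
  assert (0 <= q * (1 / s) * K).
  { apply Rmult_le_pos; auto. apply Rmult_le_pos; [lra|]. apply Rlt_le. unfold Rdiv. rewrite Rmult_1_l. apply Rinv_0_lt_compat; lra. }
  rewrite <- (Rmult_1_r (q * (1 / s) * K)) at 2.
  apply Rmult_le_compat_l; auto.
  assert (S1 : 1 <= s * s) by nra.
  assert (S2 : q * (s * s) <= (s * s) / 4) by nra.
  assert ((1 + 3 * (s * s - 2) * q) / (s * s) <= 11).
  { apply Rle_div_l; [lra|]. nra. }
  lra.
Qed.

Lemma arith2 (s q M : R) : 1 <= s -> 0 <= q <= 1/4 -> 0 <= M ->
  s * s * (M * (q / (s * s)) * q / (s * s)) <= q * (1 / s) * M.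
Proof.
  intros Hs Hq HM.
  replace (s * s * (M * (q / (s * s)) * q / (s * s))) with ((q * (1 / s) * M) * (q / s)) by (field; lra).
  assert (0 <= q * (1 / s) * M).
  { apply Rmult_le_pos; auto. apply Rmult_le_pos; [lra|]. apply Rlt_le. unfold Rdiv. rewrite Rmult_1_l. apply Rinv_0_lt_compat; lra. }
  rewrite <- (Rmult_1_r (q * (1 / s) * M)) at 2.
  apply Rmult_le_compat_l; auto.
  apply Rle_div_l; lra.
Qed.

Lemma unorm_nonneg h : (forall t, 0 <= t <= 1 -> continuous h t) -> 0 <= unorm h.
Proof. intro Hc. eapply Rle_trans; [apply Rabs_pos| apply (unorm_bound h Hc 0)]. lra. Qed.

Theorem corollary2p2 :
  exists C : R, 0 < C /\
  forall (f g : R -> R) (x : R) (n : nat),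
    C3 f -> C3 g -> 0 <= x <= 1 -> (1 <= n)%nat ->
    INR n * Rabs (bernstein n (fun t => f t * g t) x
                  - bernstein n f x * bernstein n g x
                  - x * (1 - x) / INR n * Derive f x * Derive g x)
    <= C * (x * (1 - x)) * (1 / sqrt (INR n)) *
       (unorm (Derive_n (fun t => f t * g t) 3)
        + unorm (Derive_n f 2) * unorm (Derive_n g 2)
        + unorm g * unorm (Derive_n f 3)
        + unorm f * unorm (Derive_n g 3)).
Proof.
  exists 1. split; [lra|].
  intros f g x n Hf Hg Hx Hn.
  assert (HN : 1 <= INR n) by (apply (le_INR 1); lia).
  set (N := INR n) in *.
  set (s := sqrt N).
  assert (Hs0 : 0 < s) by (apply sqrt_lt_R0; lra).
  assert (Hss : s * s = N) by (apply sqrt_sqrt; lra).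
  assert (Hs1 : 1 <= s) by nra.
  set (T := fun k => INR k / N).
  assert (Hb : forall psi, bernstein n psi x = Ex n x (fun k => psi (T k))).
  { intro psi. unfold bernstein. rewrite Ex_sum. reflexivity. }
  assert (HT : forall k, (k <= n)%nat -> 0 <= T k <= 1).
  { intros k Hk. unfold T. split.
    - apply Rmult_le_pos; [apply pos_INR| apply Rlt_le, Rinv_0_lt_compat; lra].
    - apply Rle_div_l; [lra|]. rewrite Rmult_1_l. apply le_INR; auto. }
  set (q := x * (1 - x)).
  assert (Hq : 0 <= q <= 1/4) by (unfold q; split; [apply Rmult_le_pos; lra | pose proof (Rle_0_sqr (x - 1/2)); unfold Rsqr in *; nra]).
  destruct (moments x n) as [M1 [M2 [M3 M4]]]. unfold Mo in M1, M2, M3, M4. fold N in M1, M2, M3, M4.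
  assert (Ed1 : Ex n x (fun k => T k - x) = 0).
  { rewrite (Ex_ext n x _ (fun k => / N * (INR k - N * x) ^ 1)) by (intros; unfold T; field; lra).
    rewrite Ex_scal, M1. ring. }
  assert (Ed2 : Ex n x (fun k => (T k - x) ^ 2) = q / N).
  { rewrite (Ex_ext n x _ (fun k => / N ^ 2 * (INR k - N * x) ^ 2)) by (intros; unfold T; field; lra).
    rewrite Ex_scal, M2. unfold q. field. lra. }
  assert (Ed4 : Ex n x (fun k => (T k - x) ^ 4) = / N ^ 4 * (N * q * (1 + 3 * (N - 2) * q))).
  { rewrite (Ex_ext n x _ (fun k => / N ^ 4 * (INR k - N * x) ^ 4)) by (intros; unfold T; field; lra).
    rewrite Ex_scal, M4. unfold q. field. lra. }
  set (K := unorm (Derive_n (fun t => f t * g t) 3) + unorm g * unorm (Derive_n f 3)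
      + unorm f * unorm (Derive_n g 3)).
  assert (HK : 0 <= K).
  { unfold K.
    assert (0 <= unorm (Derive_n (fun t => f t * g t) 3)) by (apply unorm_nonneg; intros; apply Pf3_cont; auto).
    assert (0 <= unorm g) by (apply (unorm_nonneg (Derive_n g 0)); intros; apply C3_cont; auto).
    assert (0 <= unorm f) by (apply (unorm_nonneg (Derive_n f 0)); intros; apply C3_cont; auto).
    assert (0 <= unorm (Derive_n f 3)) by (apply unorm_nonneg; intros; apply C3_cont; auto).
    assert (0 <= unorm (Derive_n g 3)) by (apply unorm_nonneg; intros; apply C3_cont; auto).
    assert (0 <= unorm g * unorm (Derive_n f 3)) by (apply Rmult_le_pos; auto).
    assert (0 <= unorm f * unorm (Derive_n g 3)) by (apply Rmult_le_pos; auto).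
    lra. }
  set (M2f := unorm (Derive_n f 2)). set (M2g := unorm (Derive_n g 2)).
  assert (HM2f : 0 <= M2f) by (apply unorm_nonneg; intros; apply C3_cont; auto).
  assert (HM2g : 0 <= M2g) by (apply unorm_nonneg; intros; apply C3_cont; auto).
  set (f1 := Derive f x). set (g1 := Derive g x).
  set (Eh := Ex n x (fun k => (f (T k) - f x) * (g (T k) - g x) - f1 * g1 * (T k - x) ^ 2)).
  set (A := Ex n x (fun k => f (T k) - f x - f1 * (T k - x))).
  set (B := Ex n x (fun k => g (T k) - g x - g1 * (T k - x))).
  assert (Hid : bernstein n (fun t => f t * g t) x - bernstein n f x * bernstein n g x
                - q / N * f1 * g1 = Eh - A * B).
  { rewrite !Hb. unfold Eh, A, B.
    rewrite (Ex_ext n x (fun k => (f (T k) - f x) * (g (T k) - g x) - f1 * g1 * (T k - x) ^ 2)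
      (fun k => 1 * (f (T k) * g (T k)) + (- g x) * f (T k) + (- f x) * g (T k) + (- (f1 * g1)) * (T k - x) ^ 2 + f x * g x))
      by (intros; ring).
    rewrite (Ex_ext n x (fun k => f (T k) - f x - f1 * (T k - x))
      (fun k => 1 * f (T k) + (- f1) * (T k - x) + 0 * (T k - x) + 0 * (T k - x) + (- f x)))
      by (intros; ring).
    rewrite (Ex_ext n x (fun k => g (T k) - g x - g1 * (T k - x))
      (fun k => 1 * g (T k) + (- g1) * (T k - x) + 0 * (T k - x) + 0 * (T k - x) + (- g x)))
      by (intros; ring).
    rewrite !Ex_lin, Ed1, Ed2. unfold q. field. lra. }
  rewrite Hid.
  assert (BEh : Rabs Eh <= K / 12 * (q / N / s + s * (/ N ^ 4 * (N * q * (1 + 3 * (N - 2) * q))))).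
  { unfold Eh. eapply Rle_trans. apply Ex_abs; auto.
    eapply Rle_trans. apply (Ex_le n x _ (fun k => K / 12 * ((T k - x) ^ 2 / s + s * (T k - x) ^ 4))); auto.
    - intros k Hk. eapply Rle_trans. apply (taylor_h f g Hf Hg x (T k) Hx (HT k Hk)).
      fold K. pose proof (cube_bound s (T k - x) Hs0).
      replace (K / 12 * ((T k - x) ^ 2 / s + s * (T k - x) ^ 4)) with (K / 6 * ((((T k - x) ^ 2 / s + s * (T k - x) ^ 4)) / 2)) by (field; lra).
      apply Rmult_le_compat_l; auto. apply Rmult_le_pos; [auto| lra].
    - rewrite (Ex_ext n x _ (fun k => (K / 12 / s) * (T k - x) ^ 2 + (K / 12 * s) * (T k - x) ^ 4))
        by (intros; field; lra).
      rewrite Ex_plus, !Ex_scal, Ed2, Ed4. right. field. lra. }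
  assert (BA : Rabs A <= M2f / 2 * (q / N)).
  { unfold A. eapply Rle_trans. apply Ex_abs; auto.
    eapply Rle_trans. apply (Ex_le n x _ (fun k => M2f / 2 * (T k - x) ^ 2)); auto.
    - intros k Hk. apply (taylor_f f Hf x (T k) Hx (HT k Hk)).
    - rewrite Ex_scal, Ed2. right; reflexivity. }
  assert (BB : Rabs B <= M2g / 2 * (q / N)).
  { unfold B. eapply Rle_trans. apply Ex_abs; auto.
    eapply Rle_trans. apply (Ex_le n x _ (fun k => M2g / 2 * (T k - x) ^ 2)); auto.
    - intros k Hk. apply (taylor_f g Hg x (T k) Hx (HT k Hk)).
    - rewrite Ex_scal, Ed2. right; reflexivity. }
  assert (BAB : Rabs (A * B) <= M2f * M2g * (q / N) * q / N / 4).
  { rewrite Rabs_mult.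
    replace (M2f * M2g * (q / N) * q / N / 4) with ((M2f / 2 * (q / N)) * (M2g / 2 * (q / N))) by (field; lra).
    apply Rmult_le_compat; auto using Rabs_pos. }
  pose proof (Rabs_triang Eh (- (A * B))) as Tr. rewrite Rabs_Ropp in Tr.
  replace (Eh + - (A * B)) with (Eh - A * B) in Tr by ring.
  pose proof (arith1 s q K Hs1 Hq HK) as A1.
  assert (HM : 0 <= M2f * M2g) by (apply Rmult_le_pos; auto).
  pose proof (arith2 s q (M2f * M2g / 4) Hs1 Hq ltac:(lra)) as A2.
  rewrite Hss in A1, A2.
  assert (Fin : N * Rabs (Eh - A * B) <= N * (K / 12 * (q / N / s + s * (/ N ^ 4 * (N * q * (1 + 3 * (N - 2) * q))))) + N * (M2f * M2g / 4 * (q / N) * q / N)).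
  { rewrite <- Rmult_plus_distr_l. apply Rmult_le_compat_l; [lra|].
    replace (M2f * M2g / 4 * (q / N) * q / N) with (M2f * M2g * (q / N) * q / N / 4) by (field; lra).
    lra. }
  eapply Rle_trans; [exact Fin|].
  idtac.
  replace (1 * q * (1 / s) * (unorm (Derive_n (fun t => f t * g t) 3) + M2f * M2g + unorm g * unorm (Derive_n f 3) + unorm f * unorm (Derive_n g 3)))
    with (q * (1 / s) * (unorm (Derive_n (fun t => f t * g t) 3) + unorm g * unorm (Derive_n f 3) + unorm f * unorm (Derive_n g 3)) + q * (1 / s) * (M2f * M2g / 4) * 4) by (field; lra).
  assert (0 <= q * (1 / s) * (M2f * M2g / 4)).
  { apply Rmult_le_pos; [| lra]. apply Rmult_le_pos; [lra|]. apply Rlt_le. unfold Rdiv. rewrite Rmult_1_l. apply Rinv_0_lt_compat; lra. }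
  fold K. lra.
Qed.
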